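(* Let $A$ be a quaternion or octonion division algebra over an arbitrary field $F$, and $f(x)\in A[x]$ of even degree $2n$. Suppose $f(x)$ has $n$ spherical roots from $n$ distinct quadratic-equivalence classes. Then $f(x)=c\,g(x)$ for some $c\in A$ and $g(x)\in F[x]$.
   Context: For an $F$-algebra $B$ with involution and $\gamma\in F^\times$, the Cayley--Dickson double $B\{\gamma\}$ is $B\times B$ with componentwise linear operations, product $(a,b)(c,d)=(ac+\gamma\bar d b,\ da+b\bar c)$ and involution $\overline{(a,b)}=(\bar a,-b)$. Cayley--Dickson algebras over $F$: $A_1=F[\ell_1:\ell_1^2=\ell_1+\mu]$ with $\mu\in F$, $4\mu+1\neq0$, involution $\overline{\alpha+\beta\ell_1}=(\alpha+\beta)-\beta\ell_1$, and $A_{k+1}=A_k\{\gamma_k\}$, $\gamma_k\in F^\times$. Quaternion algebras are the $A_2$, octonion algebras the $A_3$; division means the norm is anisotropic. Trace $\mathrm{tr}(\lambda)=\lambda+\bar\lambda\in F$, norm $\mathrm{n}(\lambda)=\bar\lambda\lambda\in F$, characteristic polynomial $p_\lambda(x)=x^2-\mathrm{tr}(\lambda)x+\mathrm{n}(\lambda)$. $A[x]=A\otimes_F F[x]$ with central $x$; $f(x)=a_mx^m+\dots+a_0$; substitution $f(r)=\sum_k a_k(r^k)$; $c\,g(x)$ means multiplying each coefficient of $g$ by $c$ on the left. A root $\lambda\in A\setminus F$ of $f$ is spherical if every $r\in A$ with $p_\lambda(r)=0$ is a root of $f$. Elements are quadratically-equivalent if they have the same trace and norm. *)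

(* Defs.v *)
From mathcomp Require Import all_boot all_order all_algebra.
Set Implicit Arguments. Unset Strict Implicit. Unset Printing Implicit Defensive.
Import GRing.Theory.
Local Open Scope ring_scope.

(* Level 0 of [cd] is A_1 = F[l : l^2 = l + mu], an element (a, b) meaning a + b l.
   Level k+1 is the Cayley--Dickson double (cd k){gam k}.
   Hence A_2 (quaternions) = cd 1 and A_3 (octonions) = cd 2, and the paper's
   gamma_j corresponds to [gam (j-1)]. *)

Section CD.
Variable F : fieldType.

Fixpoint cd (k : nat) : Type :=
  match k with 0 => (F * F)%type | k'.+1 => (cd k' * cd k')%type end.

Fixpoint cd0 (k : nat) : cd k :=
  match k as k0 return cd k0 with 0 => (0, 0) | k'.+1 => (cd0 k', cd0 k') end.

Fixpoint cdemb (k : nat) : F -> cd k :=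
  match k as k0 return F -> cd k0 with
  | 0 => fun a => (a, 0)
  | k'.+1 => fun a => (cdemb k' a, cd0 k')
  end.

Fixpoint cdscal (k : nat) : cd k -> F :=
  match k as k0 return cd k0 -> F with
  | 0 => fun x => x.1
  | k'.+1 => fun x => cdscal x.1
  end.

Fixpoint cdadd (k : nat) : cd k -> cd k -> cd k :=
  match k as k0 return cd k0 -> cd k0 -> cd k0 with
  | 0 => fun x y => (x.1 + y.1, x.2 + y.2)
  | k'.+1 => fun x y => (cdadd x.1 y.1, cdadd x.2 y.2)
  end.

Fixpoint cdopp (k : nat) : cd k -> cd k :=
  match k as k0 return cd k0 -> cd k0 with
  | 0 => fun x => (- x.1, - x.2)
  | k'.+1 => fun x => (cdopp x.1, cdopp x.2)
  end.

(* involution: conj (a + b l) = (a + b) - b l ;  conj (a, b) = (conj a, - b) *)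
Fixpoint cdconj (k : nat) : cd k -> cd k :=
  match k as k0 return cd k0 -> cd k0 with
  | 0 => fun x => (x.1 + x.2, - x.2)
  | k'.+1 => fun x => (cdconj x.1, cdopp x.2)
  end.

Variables (mu : F) (gam : nat -> F).

(* (a + b l)(c + d l) = (ac + mu bd) + (ad + bc + bd) l ;
   (a,b)(c,d) = (ac + gamma conj(d) b, d a + b conj(c)) *)
Fixpoint cdmul (k : nat) : cd k -> cd k -> cd k :=
  match k as k0 return cd k0 -> cd k0 -> cd k0 with
  | 0 => fun x y => (x.1 * y.1 + mu * (x.2 * y.2), x.1 * y.2 + x.2 * y.1 + x.2 * y.2)
  | k'.+1 => fun x y =>
      (cdadd (cdmul x.1 y.1) (cdmul (cdemb k' (gam k')) (cdmul (cdconj y.2) x.2)),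
       cdadd (cdmul y.2 x.1) (cdmul x.2 (cdconj y.1)))
  end.

Definition cdtr (k : nat) (x : cd k) : F := cdscal (cdadd x (cdconj x)).
Definition cdnorm (k : nat) (x : cd k) : F := cdscal (cdmul (cdconj x) x).

Fixpoint cdpow (k : nat) (r : cd k) (m : nat) : cd k :=
  match m with 0 => cdemb k 1 | m'.+1 => cdmul r (cdpow r m') end.

(* polynomials in A[x] as coefficient lists [a_0; ...; a_m];
   substitution f(r) = sum_i a_i (r^i) *)
Definition cdeval (k : nat) (f : seq (cd k)) (r : cd k) : cd k :=
  foldr (@cdadd k) (cd0 k)
    [seq cdmul (nth (cd0 k) f i) (cdpow r i) | i <- iota 0 (size f)].

Definition cdcharpoly (k : nat) (lam r : cd k) : cd k :=
  cdadd (cdadd (cdmul r r) (cdopp (cdmul (cdemb k (cdtr lam)) r)))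
        (cdemb k (cdnorm lam)).

Definition quad_equiv (k : nat) (x y : cd k) : Prop :=
  cdtr x = cdtr y /\ cdnorm x = cdnorm y.

Definition spherical_root (k : nat) (f : seq (cd k)) (lam : cd k) : Prop :=
  (~ exists a : F, lam = cdemb k a) /\
  cdeval f lam = cd0 k /\
  (forall r : cd k, cdcharpoly lam r = cd0 k -> cdeval f r = cd0 k).

(* division: the norm form is anisotropic *)
Definition cd_division (k : nat) : Prop :=
  forall x : cd k, cdnorm x = 0 -> x = cd0 k.

End CD.

(* Main.v *)
Require Import Defs.
From mathcomp Require Import all_boot all_order all_algebra ring.
Set Implicit Arguments. Unset Strict Implicit. Unset Printing Implicit Defensive.
Import GRing.Theory.
Local Open Scope ring_scope.
Section PolyPart.
Variable F : fieldType.

Definition qp (t N : F) : {poly F} := 'X^2 - t%:P * 'X + N%:P.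

Lemma qp_coef t N i : (qp t N)`_i = [:: N; -t; 1]`_i.
Proof.
rewrite /qp coefD coefB coefCM coefXn coefX coefC.
by case: i => [|[|[|i]]] /=; rewrite ?nth_nil; ring.
Qed.

Lemma qp_Poly t N : qp t N = Poly [:: N; -t; 1].
Proof. by apply/polyP => i; rewrite qp_coef coef_Poly. Qed.

Lemma qp_seq t N : (qp t N : seq F) = [:: N; -t; 1].
Proof. by rewrite qp_Poly (@PolyK _ 1) //= oner_neq0. Qed.

Lemma size_qp t N : size (qp t N) = 3.
Proof. by rewrite qp_seq. Qed.

Lemma monic_qp t N : qp t N \is monic.
Proof. by rewrite monicE lead_coefE qp_seq. Qed.

Lemma qp0 t N : qp t N != 0.
Proof. by rewrite -size_poly_eq0 size_qp. Qed.

Fixpoint PQ (t N : F) (i : nat) : F * F :=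
  match i with 0 => (1, 0) | i'.+1 => let pq := PQ t N i' in (-(N * pq.2), pq.1 + t * pq.2) end.

Lemma size_lin (a b : F) : ((size (a%:P + b%:P * 'X : {poly F})%R) < 3)%N.
Proof.
apply: (leq_ltn_trans (size_polyD _ _)).
rewrite gtn_max (leq_ltn_trans (size_polyC_leq1 _)) //=.
apply: (leq_ltn_trans (size_polyMleq _ _)).
by rewrite size_polyX addn2 /= ltnS ltnS size_polyC_leq1.
Qed.

Lemma Xn_mod t N i : 'X^i %% qp t N = (PQ t N i).1%:P + (PQ t N i).2%:P * 'X.
Proof.
elim: i => [|i IH].
  by rewrite expr0 /= modp_small ?size_poly1 ?size_qp // mul0r addr0.
rewrite exprS -modp_mul IH /=.
set P := (PQ t N i).1; set Q := (PQ t N i).2.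
have hs : (size ((-(N * Q))%:P + (P + t * Q)%:P * 'X : {poly F})%R < size (qp t N))%N.
  by rewrite size_qp size_lin.
rewrite -(modp_addl_mul_small (Q%:P) hs).
congr (_ %% _).
rewrite /qp ?polyCN ?polyCD ?polyCM ?polyCN. ring.
Qed.

Lemma dvd_qp t N m (c : nat -> F) :
  \sum_(i <- iota 0 m) (PQ t N i).1 * c i = 0 ->
  \sum_(i <- iota 0 m) (PQ t N i).2 * c i = 0 ->
  qp t N %| \poly_(i < m) c i.
Proof.
move=> h1 h2; apply/modp_eq0P.
have -> : \poly_(i < m) c i %% qp t N =
   \sum_(i < m) c i *: ((PQ t N i).1%:P + (PQ t N i).2%:P * 'X).
  rewrite poly_def; elim/big_rec2: _ => [|i y1 y2 _ <-]; first by rewrite mod0p.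
  by rewrite modpD modpZl Xn_mod.
have e : forall i, c i *: ((PQ t N i).1%:P + (PQ t N i).2%:P * 'X) =
   ((PQ t N i).1 * c i)%:P + ((PQ t N i).2 * c i)%:P * 'X.
  move=> i; rewrite -!mul_polyC !polyCM; ring.
under eq_bigr do rewrite e.
rewrite big_split /= -mulr_suml -!(big_morph _ (@polyCD F) (@polyC0 F)).
have he : forall G : nat -> F, \sum_(i < m) G i = \sum_(i <- iota 0 m) G i.
  by move=> G; rewrite -(big_mkord xpredT G) /index_iota subn0.
by rewrite (he (fun i => (PQ t N i).1 * c i)) (he (fun i => (PQ t N i).2 * c i)) h1 h2 mul0r addr0.
Qed.

Lemma qp_irr t N : (forall a : F, a ^+ 2 - t * a + N != 0) -> irreducible_poly (qp t N).
Proof.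
move=> h; apply: cubic_irreducible; first by rewrite size_qp.
move=> x; rewrite /root /qp !hornerE.
by have := h x; rewrite mulrC.
Qed.

Lemma qp_coprime t N t' N' :
  (forall a : F, a ^+ 2 - t * a + N != 0) -> (forall a : F, a ^+ 2 - t' * a + N' != 0) ->
  ~ (t = t' /\ N = N') -> coprimep (qp t N) (qp t' N').
Proof.
move=> h h' hne; apply/coprimepP => d d1 d2.
have [//|de] := irredp_XsubCP (qp_irr h) d1.
have pd : qp t N %| qp t' N' by rewrite -(eqp_dvdl _ de).
have : qp t N %= qp t' N' by rewrite -dvdp_size_eqp // !size_qp.
rewrite eqp_monic ?monic_qp // => /eqP e.
exfalso; apply: hne; have := congr1 (fun p : {poly F} => p`_0) e.
have := congr1 (fun p : {poly F} => p`_1) e.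
rewrite /= !qp_coef /= => /eqP; rewrite eqr_opp => /eqP -> ->. by [].
Qed.

End PolyPart.
Section ProdPart.
Variable F : fieldType.

Lemma coprime_prod (I : eqType) (s : seq I) (p : I -> {poly F}) (x : I) :
  (forall j, j \in s -> coprimep (p x) (p j)) -> coprimep (p x) (\prod_(j <- s) p j).
Proof.
elim: s => [|y s IH] H; first by rewrite big_nil coprimep1.
rewrite big_cons coprimepMr H ?mem_head //= IH // => j js.
by apply: H; rewrite in_cons js orbT.
Qed.

Lemma prod_dvd (I : eqType) (s : seq I) (p : I -> {poly F}) (h : {poly F}) :
  uniq s ->
  (forall i j, i != j -> coprimep (p i) (p j)) ->
  (forall i, p i %| h) -> \prod_(i <- s) p i %| h.
Proof.
move=> + Hc Hd; elim: s => [|x s IH]; first by rewrite big_nil dvd1p.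
rewrite /= => /andP[xs us]; rewrite big_cons Gauss_dvdp ?Hd ?IH //.
apply: coprime_prod => j js; apply: Hc.
by apply: contraNneq xs => ->.
Qed.

Lemma prod_size (I : eqType) (s : seq I) (p : I -> {poly F}) :
  (forall i, p i \is monic /\ size (p i) = 3%N) ->
  \prod_(i <- s) p i \is monic /\ size (\prod_(i <- s) p i) = (2 * size s).+1.
Proof.
move=> H; elim: s => [|x s [m1 s1]]; first by rewrite big_nil monic1 size_poly1.
have [mx sx] := H x.
rewrite big_cons monicMl // m1; split => //.
rewrite size_monicM // ?s1 ?sx /=; last by rewrite -size_poly_eq0 s1.
by rewrite mulnS.
Qed.

Lemma dvd_const (P h : {poly F}) (d : nat) :
  P \is monic -> size P = d.+1 -> P %| h -> (size h <= d.+1)%N ->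
  h = h`_d *: P.
Proof.
move=> mP sP dP sh.
have e := divpK dP.
set q := h %/ P in e.
have [q0|qn0] := eqVneq q 0.
  by rewrite -e q0 mul0r coef0 scale0r.
have sq : (size q <= 1)%N.
  move: sh; rewrite -e size_Mmonic // sP addnS /=.
  by move=> H; rewrite -(leq_add2r d) add1n.
rewrite -e (size1_polyC sq) mul_polyC coefZ.
have ld : P`_d = 1 by rewrite -(monicP mP) lead_coefE sP.
by rewrite ld mulr1.
Qed.
End ProdPart.
Definition cpol (F : fieldType) (mu : F) (gam : nat -> F) (k : nat) (t N : F) (r : cd F k) :=
  cdadd (cdadd (cdmul mu gam r r) (cdopp (cdmul mu gam (cdemb k t) r))) (cdemb k N).

Section Gen.
Variables (F : fieldType) (mu : F) (gam : nat -> F) (k : nat).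
Local Notation A := (cd F k).
Local Notation z := (cd0 F k).
Local Notation add := (@cdadd F k).
Local Notation mul := (@cdmul F mu gam k).
Local Notation e := (@cdemb F k).
Local Notation cp := (@cpol F mu gam k).

Hypothesis Hadd0 : forall x, add x z = x.
Hypothesis Hmul0 : forall x, mul x z = z.
Hypothesis Hmul0l : forall x, mul z x = z.
Hypothesis Hpow0 : forall r, e 1 = add (e 1) (mul (e 0) r).
Hypothesis Hstep : forall t N P Q r, mul r (add (e P) (mul (e Q) r)) =
  add (add (e (-(N*Q))) (mul (e (P + t*Q)) r)) (mul (e Q) (cp t N r)).
Hypothesis Hnil : forall r, z = add z (mul z r).
Hypothesis Hcons : forall a P Q r U V,
  add (mul a (add (e P) (mul (e Q) r))) (add U (mul V r)) =
  add (add (mul a (e P)) U) (mul (add (mul a (e Q)) V) r).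
Hypothesis Hcancel : forall u v x y, add u (mul v x) = z -> add u (mul v y) = z -> x <> y -> v = z.
Variable phi : nat -> A -> F.
Hypothesis Hphi_add : forall j x y, phi j (add x y) = phi j x + phi j y.
Hypothesis Hphi_sc : forall j a P, phi j (mul a (e P)) = P * phi j a.
Hypothesis Hphi0 : forall j, phi j z = 0.
Hypothesis Hphi_inj : forall x y, (forall j, phi j x = phi j y) -> x = y.
Hypothesis Hsecond : forall l, (~ exists a, l = e a) ->
  exists r, r <> l /\ cp (cdtr l) (cdnorm mu gam l) r = z.
Hypothesis Hself : forall l, cp (cdtr l) (cdnorm mu gam l) l = z.
Hypothesis Hnoroot : forall l, (~ exists a, l = e a) ->
  forall a, a ^+ 2 - cdtr l * a + cdnorm mu gam l != 0.

Lemma pow_eq t N r i : cp t N r = z ->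
  cdpow mu gam r i = add (e (PQ t N i).1) (mul (e (PQ t N i).2) r).
Proof.
move=> hr; elim: i => [|i IH] /=; first exact: Hpow0.
by rewrite IH (Hstep t N) hr Hmul0 Hadd0.
Qed.

Lemma foldr_split (a : nat -> A) (P Q : nat -> F) r (s : seq nat) :
  foldr add z [seq mul (a i) (add (e (P i)) (mul (e (Q i)) r)) | i <- s] =
  add (foldr add z [seq mul (a i) (e (P i)) | i <- s])
      (mul (foldr add z [seq mul (a i) (e (Q i)) | i <- s]) r).
Proof. by elim: s => [|i s IH] /=; [exact: Hnil | rewrite IH Hcons]. Qed.

Lemma phi_foldr j (a : nat -> A) (P : nat -> F) (s : seq nat) :
  phi j (foldr add z [seq mul (a i) (e (P i)) | i <- s]) = \sum_(i <- s) P i * phi j (a i).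
Proof.
elim: s => [|i s IH] /=; first by rewrite big_nil Hphi0.
by rewrite big_cons Hphi_add Hphi_sc IH.
Qed.

Lemma sph_dvd (f : seq A) l : spherical_root mu gam f l ->
  forall j, qp (cdtr l) (cdnorm mu gam l) %| \poly_(i < size f) phi j (nth z f i).
Proof.
move=> [nF [h0 hall]] j.
set t := cdtr l; set N := cdnorm mu gam l.
set a := fun i => nth z f i.
have ev : forall r, cp t N r = z -> cdeval mu gam f r =
   add (foldr add z [seq mul (a i) (e (PQ t N i).1) | i <- iota 0 (size f)])
       (mul (foldr add z [seq mul (a i) (e (PQ t N i).2) | i <- iota 0 (size f)]) r).
  move=> r hr; rewrite /cdeval -foldr_split; congr foldr.
  by apply: eq_map => i; rewrite (pow_eq _ hr).
have [r [rl hr]] := Hsecond nF.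
have hl : cp t N l = z by exact: Hself.
have e1 := ev _ hl; have e2 := ev _ hr.
rewrite h0 in e1; rewrite (hall r hr) in e2.
have V0 := Hcancel (esym e1) (esym e2) (nesym rl).
rewrite V0 Hmul0l Hadd0 in e1.
apply: dvd_qp.
  by rewrite -phi_foldr -/a -e1 Hphi0.
by rewrite -phi_foldr -/a V0 Hphi0.
Qed.

Lemma gen_main (n : nat) (f : seq A) (hsize : size f = (2 * n).+1)
  (lam : 'I_n -> A)
  (hsph : forall i, spherical_root mu gam f (lam i))
  (hdist : forall i j, i <> j -> ~ quad_equiv mu gam (lam i) (lam j)) :
  exists (c : A) (g : seq F), forall i, nth z f i = mul c (e (nth 0 g i)).
Proof.
set p := fun i => qp (cdtr (lam i)) (cdnorm mu gam (lam i)).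
set P := \prod_(i <- enum 'I_n) p i.
have [mP sP] : P \is monic /\ size P = (2 * size (enum 'I_n)).+1.
  by apply: prod_size => i; rewrite /p monic_qp size_qp.
rewrite size_enum_ord in sP.
set h := fun j => \poly_(i < size f) phi j (nth z f i).
have dP : forall j, P %| h j.
  move=> j; apply: prod_dvd; first exact: enum_uniq.
    move=> i i' ne; apply: qp_coprime.
    - exact: Hnoroot (hsph i).1.
    - exact: Hnoroot (hsph i').1.
    - by apply: hdist => ei; rewrite ei eqxx in ne.
  by move=> i; apply: sph_dvd.
have hP : forall j, h j = (h j)`_(2 * n) *: P.
  move=> j; apply: dvd_const => //; rewrite -hsize; exact: size_poly.
have hc : forall j i, phi j (nth z f i) = (h j)`_i.
  move=> j i; rewrite coef_poly; case: ltnP => // hi.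
  by rewrite nth_default // Hphi0.
exists (nth z f (2 * n)), P => i.
apply: Hphi_inj => j.
by rewrite Hphi_sc hc (hP j) coefZ -hc mulrC.
Qed.

End Gen.
Ltac split_pairs := repeat match goal with |- pair _ _ = pair _ _ => refine (f_equal2 pair _ _) end.
Ltac dcd := repeat match goal with
 | x : cd _ 1 |- _ => destruct x as [[? ?] [? ?]]
 | x : cd _ 2 |- _ => destruct x as [[[? ?] [? ?]] [[? ?] [? ?]]]
 end.
Ltac cdsolve := intros; dcd; unfold cpol, cdtr, cdnorm in *; simpl; split_pairs; ring.

Section K.
Variables (F : fieldType) (mu : F) (gam : nat -> F) (k : nat) (hk : k = 1%N \/ k = 2%N).
Local Notation A := (cd F k).
Local Notation z := (cd0 F k).
Local Notation add := (@cdadd F k).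
Local Notation mul := (@cdmul F mu gam k).
Local Notation e := (@cdemb F k).
Local Notation cp := (@cpol F mu gam k).

Lemma K_add0 : forall x, add x z = x.
Proof. by case: hk => ->; cdsolve. Qed.
Lemma K_mul0 : forall x, mul x z = z.
Proof. by case: hk => ->; cdsolve. Qed.
Lemma K_mul0l : forall x, mul z x = z.
Proof. by case: hk => ->; cdsolve. Qed.
Lemma K_pow0 : forall r, e 1 = add (e 1) (mul (e 0) r).
Proof. by case: hk => ->; cdsolve. Qed.
Lemma K_step : forall t N P Q r, mul r (add (e P) (mul (e Q) r)) =
  add (add (e (-(N*Q))) (mul (e (P + t*Q)) r)) (mul (e Q) (cp t N r)).
Proof. by case: hk => ->; cdsolve. Qed.
Lemma K_nil : forall r, z = add z (mul z r).
Proof. by case: hk => ->; cdsolve. Qed.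
Lemma K_cons : forall a P Q r U V,
  add (mul a (add (e P) (mul (e Q) r))) (add U (mul V r)) =
  add (add (mul a (e P)) U) (mul (add (mul a (e Q)) V) r).
Proof. by case: hk => ->; cdsolve. Qed.
Lemma K_self : forall l, cp (cdtr l) (cdnorm mu gam l) l = z.
Proof. by case: hk => ->; cdsolve. Qed.
End K.
Section K1.
Variables (F : fieldType) (mu : F) (gam : nat -> F).

Definition sm (b : F * F) : F * F := (-b.1 - b.2, -(b.1 + b.2) / mu - b.2).

Lemma sm_fix b : mu != 0 -> 4%:R * mu + 1 != 0 -> sm b = b -> b = (0,0).
Proof.
case: b => b0 b1 m0 hm [E1 E2].
have h : b0 * (4%:R * mu + 1) = mu * ((-(b0 + b1) / mu - b1) - b1) - ((-b0 - b1) - b0) * (1 + 2%:R * mu).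
  by field.
rewrite E1 E2 !subrr mulr0 mul0r subrr in h.
move/eqP: h; rewrite mulf_eq0 (negbTE hm) orbF => /eqP b00.
have hb1 : b1 = -((-b0 - b1) - b0) - 2%:R * b0 by ring.
by rewrite E1 b00 subrr oppr0 mulr0 subr0 in hb1; rewrite b00 hb1.
Qed.

Lemma second1 (hdiv : mu != 0) (hmu : 4%:R * mu + 1 != 0) (l : cd F 1) :
  (~ exists a, l = cdemb 1 a) ->
  exists r, r <> l /\ cpol mu gam (cdtr l) (cdnorm mu gam l) r = cd0 F 1.
Proof.
case: l => [[a0 a1] [b0 b1]] nF.
have [a10|a1n] := eqVneq a1 0.
  subst a1; have [hb|hb] := eqVneq (b0, b1) (0, 0).
    by case: nF; exists a0; case: hb => -> ->.
  exists ((a0, 0), sm (b0, b1)); split.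
    by move=> E; have := congr1 snd E => /= /(sm_fix hdiv hmu) hb'; rewrite hb' eqxx in hb.
  unfold cpol, cdtr, cdnorm; simpl; split_pairs; field; exact: hdiv.
exists ((a0 + a1, -a1), (b0, b1)); split.
  case=> /eqP; rewrite -subr_eq0 addrC addKr => /eqP a0'.
  by rewrite a0' eqxx in a1n.
cdsolve.
Qed.

Lemma second2 (hdiv : mu != 0) (hmu : 4%:R * mu + 1 != 0) (l : cd F 2) :
  (~ exists a, l = cdemb 2 a) ->
  exists r, r <> l /\ cpol mu gam (cdtr l) (cdnorm mu gam l) r = cd0 F 2.
Proof.
case: l => [[[a0 a1] [b0 b1]] [[c0 c1] [d0 d1]]] nF.
have [a10|a1n] := eqVneq a1 0.
  subst a1; have [hb|hb] := eqVneq (b0, b1) (0, 0).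
    case: hb => hb0 hb1; subst b0 b1.
    have [hc|hc] := eqVneq (c0, c1) (0, 0).
      case: hc => hc0 hc1; subst c0 c1.
      have [hd|hd] := eqVneq (d0, d1) (0, 0).
        by case: nF; exists a0; case: hd => -> ->.
      exists (((a0, 0), (0, 0)), ((0, 0), sm (d0, d1))); split.
        by move=> E; have := congr1 (fun x => x.2.2) E => /= /(sm_fix hdiv hmu) hb'; rewrite hb' eqxx in hd.
      unfold cpol, cdtr, cdnorm; simpl; split_pairs; field; exact: hdiv.
    exists (((a0, 0), (0, 0)), (sm (c0, c1), (d0, d1))); split.
      by move=> E; have := congr1 (fun x => x.2.1) E => /= /(sm_fix hdiv hmu) hb'; rewrite hb' eqxx in hc.
    unfold cpol, cdtr, cdnorm; simpl; split_pairs; field; exact: hdiv.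
  exists (((a0, 0), sm (b0, b1)), ((c0, c1), (d0, d1))); split.
    by move=> E; have := congr1 (fun x => x.1.2) E => /= /(sm_fix hdiv hmu) hb'; rewrite hb' eqxx in hb.
  unfold cpol, cdtr, cdnorm; simpl; split_pairs; field; exact: hdiv.
exists (((a0 + a1, -a1), (b0, b1)), ((c0, c1), (d0, d1))); split.
  case=> /eqP; rewrite -subr_eq0 addrC addKr => /eqP a0'.
  by rewrite a0' eqxx in a1n.
cdsolve.
Qed.

End K1.
Fixpoint cdflat (F : fieldType) (k : nat) : cd F k -> seq F :=
  match k as k0 return cd F k0 -> seq F with
  | 0 => fun x => [:: x.1; x.2]
  | k'.+1 => fun x => cdflat x.1 ++ cdflat x.2
  end.

Section K2.
Variables (F : fieldType) (mu : F) (gam : nat -> F) (k : nat) (hk : k = 1%N \/ k = 2%N).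
Local Notation A := (cd F k).
Local Notation z := (cd0 F k).
Local Notation add := (@cdadd F k).
Local Notation mul := (@cdmul F mu gam k).
Local Notation e := (@cdemb F k).
Local Notation cp := (@cpol F mu gam k).
Definition phi (j : nat) (x : A) := nth 0 (cdflat x) j.

Ltac jcases := intros j; do 17 try (case: j => [|j]); simpl; rewrite ?nth_nil; ring.

Lemma K_phi_add : forall j x y, phi j (add x y) = phi j x + phi j y.
Proof. rewrite /phi; case: hk => -> j x y; dcd; move: j; jcases. Qed.
Lemma K_phi_sc : forall j a P, phi j (mul a (e P)) = P * phi j a.
Proof. rewrite /phi; case: hk => -> j x P; dcd; move: j; jcases. Qed.
Lemma K_phi0 : forall j, phi j z = 0.
Proof. rewrite /phi; case: hk => ->; jcases. Qed.
Lemma K_phi_inj : forall x y, (forall j, phi j x = phi j y) -> x = y.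
Proof.
rewrite /phi; case: hk => -> x y; dcd => H.
  by move: (H 0%N) (H 1%N) (H 2%N) (H 3%N) => /= -> -> -> ->.
by move: (H 0%N) (H 1%N) (H 2%N) (H 3%N) (H 4%N) (H 5%N) (H 6%N) (H 7%N) => /= -> -> -> -> -> -> -> ->.
Qed.

Lemma R1 : forall u v x y, mul v (add y (cdopp x)) = add (cdopp (add u (mul v x))) (add u (mul v y)).
Proof. by case: hk => ->; cdsolve. Qed.
Lemma Rz : add (cdopp z) z = z.
Proof. by case: hk => ->; cdsolve. Qed.
Lemma R2 : forall v d, mul (mul v d) (cdconj d) = mul (e (cdnorm mu gam d)) v.
Proof. by case: hk => ->; cdsolve. Qed.
Lemma R3 : forall x y, y = add (add y (cdopp x)) x.
Proof. by case: hk => ->; cdsolve. Qed.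
Lemma Rz2 : forall x, add z x = x.
Proof. by case: hk => ->; cdsolve. Qed.
Lemma R4 : forall a b v, mul (e a) (mul (e b) v) = mul (e (a * b)) v.
Proof. by case: hk => ->; cdsolve. Qed.
Lemma R5 : forall v, mul (e 1) v = v.
Proof. by case: hk => ->; cdsolve. Qed.
Lemma Rml : forall x, mul z x = z.
Proof. by case: hk => ->; cdsolve. Qed.
Lemma Rmr : forall x, mul x z = z.
Proof. by case: hk => ->; cdsolve. Qed.
Lemma Rnorm : forall l a, cdnorm mu gam (add l (cdopp (e a))) = a ^+ 2 - cdtr l * a + cdnorm mu gam l.
Proof. by case: hk => ->; cdsolve. Qed.

Hypothesis hdiv : cd_division mu gam k.

Lemma K_cancel u v x y : add u (mul v x) = z -> add u (mul v y) = z -> x <> y -> v = z.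
Proof.
move=> h1 h2 nxy.
have hd : mul v (add y (cdopp x)) = z by rewrite (R1 u) h1 h2 Rz.
set d := add y (cdopp x) in hd.
have h3 : mul (e (cdnorm mu gam d)) v = z by rewrite -R2 hd Rml.
have [n0|nn0] := eqVneq (cdnorm mu gam d) 0.
  by exfalso; apply: nxy; rewrite (R3 x y) -/d (hdiv n0) Rz2.
by rewrite -(R5 v) -(mulVf nn0) -R4 h3 Rmr.
Qed.

Lemma K_noroot l : (~ exists a, l = e a) -> forall a, a ^+ 2 - cdtr l * a + cdnorm mu gam l != 0.
Proof.
move=> nF a; apply/eqP => h; apply: nF; exists a.
by rewrite (R3 (e a) l) (hdiv (etrans (Rnorm l a) h)) Rz2.
Qed.
End K2.

Lemma K_mu (F : fieldType) (mu : F) (gam : nat -> F) (k : nat) (hk : k = 1%N \/ k = 2%N) :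
  cd_division mu gam k -> mu != 0.
Proof.
move=> hdiv; apply/eqP => m0; case: hk => hk; subst k.
  have h : cdnorm mu gam (((0,1),(0,0)) : cd F 1) = 0 by rewrite /cdnorm /= m0; ring.
  by move: (hdiv _ h) => [] /eqP; rewrite oner_eq0.
have h : cdnorm mu gam ((((0,1),(0,0)),((0,0),(0,0))) : cd F 2) = 0 by rewrite /cdnorm /= m0; ring.
by move: (hdiv _ h) => [] /eqP; rewrite oner_eq0.
Qed.

Lemma K_second (F : fieldType) (mu : F) (gam : nat -> F) (k : nat) (hk : k = 1%N \/ k = 2%N)
  (mu0 : mu != 0) (hmu : 4%:R * mu + 1 != 0) :
  forall l : cd F k, (~ exists a, l = cdemb k a) ->
  exists r, r <> l /\ cpol mu gam (cdtr l) (cdnorm mu gam l) r = cd0 F k.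
Proof. case: hk => ->; [exact: second1 | exact: second2]. Qed.


(* k = 1 : quaternion algebra A_2 ;  k = 2 : octonion algebra A_3 *)
Theorem corollary3p20 (F : fieldType) (mu : F) (gam : nat -> F) (k : nat)
  (hk : k = 1%N \/ k = 2%N)
  (hmu : 4%:R * mu + 1 != 0)
  (hgam : forall i, (i < k)%N -> gam i != 0)
  (hdiv : cd_division mu gam k)
  (n : nat) (f : seq (cd F k))
  (hsize : size f = (2 * n).+1)
  (hlead : last (cd0 F k) f <> cd0 F k)
  (lam : 'I_n -> cd F k)
  (hsph : forall i, spherical_root mu gam f (lam i))
  (hdist : forall i j, i <> j -> ~ quad_equiv mu gam (lam i) (lam j)) :
  exists (c : cd F k) (g : seq F),
    forall i, nth (cd0 F k) f i = cdmul mu gam c (cdemb k (nth 0 g i)).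
Proof.
have mu0 := K_mu hk hdiv.
refine (@gen_main F mu gam k _ _ _ _ _ _ _ _ (@phi F k) _ _ _ _ _ _ _ n f hsize lam hsph hdist).
- exact: K_add0 hk.
- exact: K_mul0 hk.
- exact: K_mul0l hk.
- exact: K_pow0 hk.
- exact: K_step hk.
- exact: K_nil hk.
- exact: K_cons hk.
- exact: K_cancel hk hdiv.
- exact: K_phi_add hk.
- exact: K_phi_sc hk.
- exact: K_phi0 hk.
- exact: K_phi_inj hk.
- exact: K_second hk mu0 hmu.
- exact: K_self hk.
- exact: K_noroot hk hdiv.
Qed.
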